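(* Let $X$ be a compact $\ell_1$-convex subset of $\mathbb{R}^n$. Then for $0\le j\le k\le n$, \[ \int_{\mathrm{Graff}_{n,k}} V_j(X\cap A)\,dA=\binom{n+j-k}{j}V_{n+j-k}(X). \] In particular, for $0\le k\le n$, the set $\{A\in\mathrm{Graff}_{n,k}: X\cap A\neq\emptyset\}$ has measure $V_{n-k}(X)$.
   Context: A subset $X\subseteq\mathbb{R}^n$ is $\ell_1$-convex if any two of its points $x,x'$ are joined by a map $\gamma\colon[0,D]\to X$, $D=\sum_i|x_i-x'_i|$, with $\gamma(0)=x,\gamma(D)=x'$ and $\sum_i|\gamma_i(t)-\gamma_i(t')|=|t-t'|$. $G_{n,k}$ is the set of $k$-dimensional coordinate subspaces of $\mathbb{R}^n$ (spanned by $k$ standard basis vectors); $P^\perp$ is the orthogonal complement and $\pi_P$ orthogonal projection. $\mathrm{Graff}_{n,k}$ is the set of $k$-dimensional affine subspaces parallel to some element of $G_{n,k}$; each is uniquely $P+q$ with $P\in G_{n,k}$, $q\in P^\perp$, so $\mathrm{Graff}_{n,k}\cong\coprod_{P\in G_{n,k}}P^\perp$, and it carries the measure obtained by summing Lebesgue measure $\mathrm{Vol}_{n-k}$ on each $P^\perp$. The $i$th $\ell_1$-intrinsic volume of a compact $\ell_1$-convex set $Y$ lying in $\mathbb{R}^n$ is $V_i(Y)=\sum_{P\in G_{n,i}}\mathrm{Vol}_i(\pi_PY)$; for $Y\subseteq A$ with $A$ an affine coordinate-parallel subspace, $V_i(Y)$ is computed in $\mathbb{R}^n$ (this agrees with computing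 intrinsically in $A$). For sets $X\cap A$ not necessarily $\ell_1$-convex the integrand is understood via this same formula. *)

(* Defs.v *)
(* Points of R^n are functions 'I_n -> R
   (carrying the canonical product topology of MathComp-Analysis). *)
From mathcomp Require Import all_boot all_order all_algebra.
From mathcomp Require Import all_classical all_reals all_analysis.
Set Implicit Arguments. Unset Strict Implicit. Unset Printing Implicit Defensive.
Import Order.TTheory GRing.Theory Num.Theory.
Import numFieldNormedType.Exports.
Local Open Scope classical_set_scope.
Local Open Scope ring_scope.

Section Defs.
Variable R : realType.

Definition vcons (m : nat) (t : R) (y : 'I_m -> R) : 'I_m.+1 -> R :=
  fun i => match unlift ord0 i with None => t | Some j => y j end.

(* Iterated Lebesgue integral of a nonnegative extended-real function on R^m
   (integrating the first coordinate last).  For nonnegative Borel functions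
   this is the integral w.r.t. m-dimensional Lebesgue measure (Tonelli). *)
Fixpoint lint (m : nat) : (('I_m -> R) -> \bar R) -> \bar R :=
  match m with
  | 0 => fun f => f (fun _ => 0)
  | m'.+1 => fun f =>
      (\int[@lebesgue_measure R]_(t in setT) lint (fun y => f (vcons t y)))%E
  end.

(* The coordinate vector y : R^{#|T|} placed on the coordinates of T
   (listed increasingly via enum T), and 0 off T. *)
Definition embed (n : nat) (T : {set 'I_n}) (y : 'I_#|T| -> R) : 'I_n -> R :=
  fun i => odflt 0 (omap y (insub (index i (enum T)) : option 'I_#|T|)).

Definition setint (n : nat) (T : {set 'I_n}) (F : ('I_n -> R) -> \bar R) : \bar R :=
  @lint #|T| (fun y => F (@embed n T y)).

(* Vol_{#|S|} (pi_P Y), P the coordinate subspace spanned by the e_i, i in S. *)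
Definition projvol (n : nat) (S : {set 'I_n}) (Y : set ('I_n -> R)) : \bar R :=
  setint S (fun z =>
    (\1_[set z | exists2 x, Y x & forall i, i \in S -> x i = z i] z)%:E).

(* i-th l1-intrinsic volume: V_i(Y) = sum_{P in G_{n,i}} Vol_i(pi_P Y). *)
Definition l1vol (n : nat) (i : nat) (Y : set ('I_n -> R)) : \bar R :=
  (\sum_(S : {set 'I_n} | #|S| == i) projvol S Y)%E.

(* affine coordinate subspace P + q, P spanned by e_i (i in S), q in P^perp *)
Definition affsub (n : nat) (S : {set 'I_n}) (q : 'I_n -> R) : set ('I_n -> R) :=
  [set x | forall i, i \notin S -> x i = q i].

(* integral over Graff_{n,k} = coprod_{P in G_{n,k}} P^perp *)
Definition graff_int (n k : nat) (F : set ('I_n -> R) -> \bar R) : \bar R :=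
  (\sum_(S : {set 'I_n} | #|S| == k) setint (~: S) (fun q => F (affsub S q)))%E.

Definition l1dist (n : nat) (x y : 'I_n -> R) : R := \sum_i `|x i - y i|.

Definition l1_convex (n : nat) (X : set ('I_n -> R)) : Prop :=
  forall x x', X x -> X x' ->
    exists gamma : R -> ('I_n -> R),
      [/\ gamma 0 = x, gamma (l1dist x x') = x',
          (forall t, 0 <= t <= l1dist x x' -> X (gamma t)) &
          (forall t t', 0 <= t <= l1dist x x' -> 0 <= t' <= l1dist x x' ->
             l1dist (gamma t) (gamma t') = `|t - t'|)].

End Defs.

(* Main.v *)
Require Import Defs.
From mathcomp Require Import all_boot all_order all_algebra.
From mathcomp Require Import all_classical all_reals all_analysis.
From mathcomp Require Import measurable_realfun.
From mathcomp Require Import lra zify.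
Import Order.TTheory GRing.Theory Num.Theory.
Import numFieldNormedType.Exports.
Local Open Scope classical_set_scope.
Local Open Scope ring_scope.
Section Main.
Variable R : realType.
Variable n : nat.
Local Notation V := ('I_n -> R).

Definition setc (w : V) (i : 'I_n) (t : R) : V :=
  fun j => if j == i then t else w j.

Fixpoint iint (s : seq 'I_n) (F : V -> \bar R) (w : V) : \bar R :=
  match s with
  | [::] => F w
  | i :: s' => (\int[@lebesgue_measure R]_(t in setT) iint s' F (setc w i t))%E
  end.

Definition good (F : V -> \bar R) : Prop :=
  forall d (Q : measurableType d) (phi : 'I_n -> Q -> R),
    (forall i, measurable_fun setT (phi i)) ->
    measurable_fun (U := \bar R) setT (fun q => F (fun i => phi i q)).

Lemma iint_ge0 s F w : (forall w, 0 <= F w)%E -> (0 <= iint s F w)%E.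
Proof.
move=> F0; elim: s w => //= i s IH w.
by apply: integral_ge0 => t _; exact: IH.
Qed.

Lemma iint_good s F : good F -> (forall w, 0 <= F w)%E -> good (iint s F).
Proof.
move=> gF F0; elim: s => //= i s IH d Q phi mphi.
pose phi' : 'I_n -> (Q * measurableTypeR R)%type -> R :=
  fun j p => if j == i then p.2 else phi j p.1.
have m' : forall j, measurable_fun setT (phi' j).
  move=> j; rewrite /phi'; case: (j == i).
    exact: measurable_snd.
  exact: measurableT_comp (mphi j) measurable_fst.
have mf := IH _ _ phi' m'.
have := @measurable_fun_fubini_tonelli_F _ _ _ _ _ (@lebesgue_measure R)
  (fun p => iint s F (fun j => phi' j p)) mf (fun _ => iint_ge0 _ _ _ F0).
by [].
Qed.

Lemma good_setc F w i : good F ->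
  measurable_fun (U := \bar R) (@setT (measurableTypeR R)) (fun t => F (setc w i t)).
Proof.
move=> gF.
pose phi : 'I_n -> measurableTypeR R -> R := fun j t => if j == i then t else w j.
have mphi : forall j, measurable_fun setT (phi j).
  by move=> j; rewrite /phi; case: (j == i) => //; exact: measurable_cst.
exact: (gF _ _ phi mphi).
Qed.

Lemma iint_ext s F F' w w' :
  (forall u, (forall i, i \notin s -> u i = w i) ->
     F u = F' (fun i => if i \in s then u i else w' i)) ->
  iint s F w = iint s F' w'.
Proof.
elim: s w w' => [|a s IH] w w' H /=.
  by rewrite (H w).
apply: eq_integral => t _; apply: IH => u Hu.
rewrite (H u).
  congr F'; apply/funext => i; rewrite inE /setc.
  case: (boolP (i \in s)) => iS; first by rewrite orbT.
  rewrite orbF; case: eqP => // eia; rewrite eia in iS *; by rewrite (Hu a iS) /setc eqxx.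
move=> i; rewrite inE negb_or => /andP[ia iS]; rewrite (Hu i iS) /setc.
by rewrite (negbTE ia).
Qed.

Lemma iint_cat s1 s2 F w : iint (s1 ++ s2) F w = iint s1 (iint s2 F) w.
Proof.
elim: s1 w => //= a s1 IH w; apply: eq_integral => t _; exact: IH.
Qed.

Lemma iint_swap i j s F w : good F -> (forall w, 0 <= F w)%E ->
  iint [:: i, j & s] F w = iint [:: j, i & s] F w.
Proof.
move=> gF F0; have [<-//|ij] := eqVneq i j.
rewrite /=.
pose phi : 'I_n -> (measurableTypeR R * measurableTypeR R)%type -> R :=
  fun k p => if k == j then p.2 else if k == i then p.1 else w k.
have mphi : forall k, measurable_fun setT (phi k).
  move=> k; rewrite /phi; case: (k == j); first exact: measurable_snd.
  case: (k == i); first exact: measurable_fst.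
  exact: measurable_cst.
have mf := @iint_good s F gF F0 _ _ phi mphi.
have := @fubini_tonelli _ _ _ _ _ (@lebesgue_measure R) (@lebesgue_measure R)
   (fun p => iint s F (fun k => phi k p)) mf (fun _ => iint_ge0 _ _ _ F0).
move=> /= E.
transitivity (\int[@lebesgue_measure R]_x \int[@lebesgue_measure R]_y
                 iint s F (fun k => phi k (x, y)))%E.
  by [].
rewrite E; apply: eq_integral => u _; apply: eq_integral => t _.
congr (iint s F); apply/funext => k; rewrite /phi /setc /=.
case: (eqVneq k j) => [->|kj]; first by rewrite eq_sym (negbTE ij).
by case: (k == i).
Qed.

Lemma iint_bubble a s1 s2 F w : good F -> (forall w, 0 <= F w)%E ->
  iint (s1 ++ a :: s2) F w = iint (a :: s1 ++ s2) F w.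
Proof.
move=> gF F0; elim: s1 w => [//|b s1 IH] w.
transitivity (iint [:: b, a & s1 ++ s2] F w).
  by rewrite /=; apply: eq_integral => t _; exact: IH.
exact: iint_swap.
Qed.

Lemma iint_perm s1 s2 F w : good F -> (forall w, 0 <= F w)%E ->
  perm_eq s1 s2 -> iint s1 F w = iint s2 F w.
Proof.
move=> gF F0; elim: s1 s2 w => [|x s1 IH] s2 w.
  by move=> /perm_size /= /esym /size0nil ->.
move=> pe; have xin : x \in s2 by rewrite -(perm_mem pe) mem_head.
move: pe; case/splitPr: s2 / xin => s2a s2b pe.
rewrite iint_bubble //=; apply: eq_integral => t _; apply: IH.
have : perm_eq (x :: s1) (x :: s2a ++ s2b).
  apply: (perm_trans pe).
  by rewrite -cat1s -[x :: s2a ++ s2b]cat1s perm_catCA.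
by rewrite perm_cons.
Qed.

Lemma iint_cst0 s w : iint s (fun _ => 0%E) w = 0%E.
Proof.
elim: s w => //= a s IH w; apply: integral0_eq => t _; exact: IH.
Qed.

Lemma iint_eq0 s F w : (forall u, (forall i, i \notin s -> u i = w i) -> F u = 0%E) ->
  iint s F w = 0%E.
Proof.
move=> H; rewrite (@iint_ext s F (fun _ => 0%E) w w); first exact: iint_cst0.
by move=> u Hu; exact: H.
Qed.

Lemma iint_zero i c s F w : good F -> (forall w, 0 <= F w)%E ->
  uniq s -> i \in s -> (forall u, u i != c -> F u = 0%E) -> iint s F w = 0%E.
Proof.
move=> gF F0; elim: s w => // a s IH w /= /andP[aS us].
rewrite inE; case: (eqVneq i a) => [eia|ia] /= iS Fz; first subst a.
  have g0 : forall t, t != c -> iint s F (setc w i t) = 0%E.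
    move=> t tc; apply: iint_eq0 => u Hu; apply: Fz.
    by rewrite (Hu i aS) /setc eqxx.
  rewrite -(@integral_setD1 _ _ c).
  - apply: integral0_eq => t [_ /= tc]; apply: g0; apply/eqP => tce; exact: tc.
  - by apply: measurableD => //; exact: measurable_set1.
  - have := good_setc _ w i (@iint_good s F gF F0). move=> mm. by apply: measurable_funS mm.
apply: integral0_eq => t _; exact: IH.
Qed.

Lemma iint_sum (I : Type) (r : seq I) (G : I -> V -> \bar R) s w :
  (forall k, good (G k)) -> (forall k w, 0 <= G k w)%E ->
  iint s (fun u => \sum_(k <- r) G k u)%E w = (\sum_(k <- r) iint s (G k) w)%E.
Proof.
move=> gG G0; elim: s w => //= a s IH w.
transitivity (\int[@lebesgue_measure R]_(t in setT)
   (\sum_(k <- r) iint s (G k) (setc w a t)))%E.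
  by apply: eq_integral => t _; exact: IH.
apply: ge0_integral_sum => //.
  move=> k; exact: good_setc _ w a (@iint_good s (G k) (gG k) (G0 k)).
move=> k t _; exact: iint_ge0.
Qed.

Definition emb (m : nat) (s : seq 'I_n) (y : 'I_m -> R) (w : V) : V :=
  fun i => match (insub (index i s) : option 'I_m) with
           | Some k => y k | None => w i end.

Lemma emb_cons (s : seq 'I_n) a t (y : 'I_(size s) -> R) w :
  a \notin s ->
  emb (size s).+1 (a :: s) (vcons t y) w = emb (size s) s y (setc w a t).
Proof.
move=> aS; apply/funext => i; rewrite /emb /= /setc.
case: (eqVneq a i) => [<-|ai].
  rewrite (insubT (fun k : nat => (k < (size s).+1)%N) (ltn0Sn _)).
  rewrite (memNindex aS) insubF ?ltnn //.
  rewrite [X in vcons _ _ X](_ : _ = ord0); last exact: val_inj.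
  by rewrite /vcons unlift_none.
case: (ltnP (index i s) (size s)) => h.
  have h' : ((index i s).+1 < (size s).+1)%N by [].
  rewrite (insubT (fun k : nat => (k < (size s).+1)%N) h') (insubT (fun k : nat => (k < size s)%N) h).
  rewrite [X in vcons _ _ X](_ : _ = lift ord0 (Sub (index i s) h)); last exact: val_inj.
  by rewrite /vcons liftK.
rewrite insubF; last by rewrite ltnNge ltnS h.
by rewrite insubF // ltnNge h.
Qed.

Lemma lint_emb s F w : uniq s ->
  @lint R (size s) (fun y => F (emb (size s) s y w)) = iint s F w.
Proof.
elim: s w => [|a s IH] w /=.
  move=> _; congr F; apply/funext => i; by rewrite /emb insubF.
move=> /andP[aS us]; apply: eq_integral => t _.
rewrite -(IH _ us); congr lint; apply/funext => y.
by rewrite emb_cons.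
Qed.

Lemma setint_iint (T : {set 'I_n}) F :
  setint T F = iint (enum T) F (fun _ => 0).
Proof.
rewrite /setint -lint_emb ?enum_uniq //.
have e : #|T| = size (enum T) by rewrite cardE.
rewrite /embed /emb.
move: (enum T) e => s e.
move: #|T| e => m e; subst m.
congr lint; apply/funext => y; congr F; apply/funext => i.
by case: insub.
Qed.

Lemma closed_approx (C : set V) (x : V) :
  @closed (prod_topology (fun _ : 'I_n => R)) C ->
  (forall m : nat, exists y, C y /\ forall i, `|x i - y i| < (m.+1%:R)^-1) -> C x.
Proof.
move=> cC H.
have [y Hy] := choice H.
apply: (@closed_cvg nat (prod_topology (fun _ : 'I_n => R)) \oo _ y C cC).
  by apply: nearW => m; exact: (Hy m).1.
have Hi : forall i, (fun m => y m i) @ \oo --> x i.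
  move=> i.
apply/cvgrPdist_lt => e e0.
near=> m.
apply: lt_trans ((Hy m).2 i) _.
near: m.
exact: (@near_infty_natSinv_lt R (PosNum e0)).
Unshelve. all: end_near.
apply/(@cvg_sup _ 'I_n (fun i => Topological.class (initial_topology (fun f : 'I_n -> R => f i)))) => i.
apply/(@cvg_image _ _ (fun f : 'I_n -> R => f i)).
  apply/seteqP; split => // r _; exists (fun _ => r) => //.
move=> B /Hi; rewrite /= => [[N _ HN]].
exists [set f : 'I_n -> R | B (f i)].
  by exists N => // m /HN.
apply/seteqP; split; first by move=> _ [f Bf <-].
by move=> r Br; exists (fun _ => r).
Qed.

Definition box (m : nat) (c : {ffun 'I_n -> int}) (v : V) : Prop :=
  forall i, (c i)%:~R <= m.+1%:R * v i < (c i + 1)%:~R.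

Lemma box_dist m c v y i : box m c v -> box m c y -> `|v i - y i| < (m.+1%:R)^-1.
Proof.
move=> /(_ i) /andP[h1 h2] /(_ i) /andP[h3 h4].
have a0 : (0 : R) < m.+1%:R by rewrite ltr0n.
rewrite -[_^-1]mulr1 ltr_pdivlMl //.
have -> : m.+1%:R * `|v i - y i| = `|m.+1%:R * v i - m.+1%:R * y i|.
  by rewrite -mulrBr normrM ger0_norm // ltW.
rewrite ltr_norml; move: h1 h2 h3 h4; rewrite intrD /=.
move=> h1 h2 h3 h4; apply/andP; split; lra.
Qed.

Lemma box_floor m (v : V) : box m [ffun i => Num.floor (m.+1%:R * v i)] v.
Proof. by move=> i; rewrite ffunE floor_itv. Qed.

Lemma measurable_box d (Q : measurableType d) (phi : 'I_n -> Q -> R) m c :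
  (forall i, measurable_fun setT (phi i)) ->
  measurable [set q | box m c (fun i => phi i q)].
Proof.
move=> mphi.
have -> : [set q | box m c (fun i => phi i q)] =
  \bigcap_(i in [set: 'I_n])
    ((fun q => m.+1%:R * phi i q) @^-1` [set` `[(c i)%:~R, (c i + 1)%:~R[%R]).
  apply/seteqP; split => q /=.
    by move=> H i _; rewrite /= in_itv /=; exact: H.
  by move=> H i; have := H i I; rewrite /= in_itv.
apply: fin_bigcap_measurable; first exact: finite_finset.
move=> i _; rewrite -[X in measurable X]setTI.
have mf : measurable_fun setT (fun q => m.+1%:R * phi i q).
  exact: (measurable_funM (measurable_cst _) (mphi i)).
by apply: mf => //; exact: measurable_itv.
Qed.

Lemma good_closed (C : set V) :
  @closed (prod_topology (fun _ : 'I_n => R)) C -> good (fun w => (\1_C w)%:E).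
Proof.
move=> cC d Q phi mphi.
pose A := [set q | C (fun i => phi i q)].
suff mA : measurable A.
  have -> : (fun q => (\1_C (fun i => phi i q))%:E) = EFin \o (\1_A : Q -> R).
    apply/funext => q; rewrite /= /indic; congr ((_ : bool)%:R%:E).
  exact/measurable_EFinP/measurable_indic.
pose Bk m k : set Q := match (unpickle k : option {ffun 'I_n -> int}) with
  | Some c => [set q | (exists y, C y /\ box m c y) /\ box m c (fun i => phi i q)]
  | None => set0 end.
have -> : A = \bigcap_m \bigcup_k Bk m k.
  apply/seteqP; split => q.
    move=> Aq m _; exists (pickle [ffun i => Num.floor (m.+1%:R * phi i q)]) => //.
    rewrite /Bk pickleK; split; last exact: box_floor.
    by exists (fun i => phi i q); split => //; exact: box_floor.
  move=> H; apply: (@closed_approx C (fun i => phi i q) cC) => m.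
  have [k _] := H m I; rewrite /Bk; case: unpickle => // c [[y [Cy bY]] bq].
  by exists y; split => // i; exact: (@box_dist m c (fun i => phi i q) y i bq bY).
apply: bigcapT_measurable => m; apply: bigcupT_measurable => k.
rewrite /Bk; case: unpickle => // c.
have [[y Hy]|ny] := pselect (exists y, C y /\ box m c y).
  have -> : [set q | (exists y, C y /\ box m c y) /\ box m c (fun i => phi i q)] =
      [set q | box m c (fun i => phi i q)].
    by apply/seteqP; split => q /= => [[]|h]//; split => //; exists y.
  exact: measurable_box.
have -> : [set q | (exists y, C y /\ box m c y) /\ box m c (fun i => phi i q)] = set0.
  by apply/seteqP; split => q //= [].
exact: measurable0.
Qed.

Local Notation PT := (prod_topology (fun _ : 'I_n => R)).

Lemma prod_cvg_coord {Y : Type} (F : set_system Y) {FF : Filter F} (f : Y -> V) (l : V) :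
  (forall i, (fun a => f a i) @ F --> l i) -> f @ F --> (l : PT).
Proof.
move=> Hi.
apply/(@cvg_sup _ 'I_n (fun i => Topological.class (initial_topology (fun f : 'I_n -> R => f i)))) => i.
apply/(@cvg_image _ _ (fun f : 'I_n -> R => f i)).
  apply/seteqP; split => // r _; exists (fun _ => r) => //.
move=> B /Hi; rewrite /= => HB.
exists [set g : 'I_n -> R | B (g i)] => //.
apply/seteqP; split; first by move=> _ [g Bg <-].
by move=> r Br; exists (fun _ => r).
Qed.

Lemma coord_cvg {Y : Type} (F : set_system Y) {FF : Filter F} (f : Y -> V) (l : V) i :
  f @ F --> (l : PT) -> (fun a => f a i) @ F --> l i.
Proof.
move=> /(@cvg_sup _ 'I_n (fun i => Topological.class (initial_topology (fun f : 'I_n -> R => f i)))).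
move=> H.
have sj : (fun g : 'I_n -> R => g i) @` setT = setT.
  by apply/seteqP; split => // r _; exists (fun _ => r).
have := (@cvg_image _ _ (fun g : 'I_n -> R => g i) (f @ F) l _ sj).1 (H i).
move=> {}H B /H [A FA AB].
have FA' : F (f @^-1` A) := FA.
suff : F [set a | B (f a i)] by [].
apply: (filterS _ FA') => a Aa.
by rewrite /= -AB; exists (f a).
Qed.

Definition piT (T : {set 'I_n}) (w : V) : V := fun i => if i \in T then w i else 0.

Lemma piT_cont T : continuous (piT T : PT -> PT).
Proof.
move=> w.
have : piT T @ (nbhs (w : PT)) --> (piT T w : PT).
  apply: (@prod_cvg_coord _ (nbhs (w : PT)) _ (piT T) (piT T w)) => i.
  rewrite /piT; case: (i \in T).
    exact: (@coord_cvg _ (nbhs (w : PT)) _ id w i cvg_id).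
  exact: cvg_cst.
done.
Qed.

Lemma hausdorff_PT : hausdorff_space PT.
Proof.
have := @hausdorff_product 'I_n (fun _ => R) (fun _ => @Rhausdorff R).
exact.
Qed.

Definition cyl (T : {set 'I_n}) (X : set V) : set V :=
  [set w | exists2 x, X x & forall i, i \in T -> x i = w i].

Lemma cyl_closed T X : @compact PT X -> @closed PT (cyl T X).
Proof.
move=> cX.
have -> : cyl T X = piT T @^-1` (piT T @` X).
  apply/seteqP; split => w.
    move=> [x Xx H]; exists x => //; apply/funext => i; rewrite /piT.
    by case: ifP => // iT; rewrite H.
  move=> [x Xx E]; exists x => // i iT.
  by have := congr1 (fun f => f i) E; rewrite /piT iT.
apply: (@preimage_closed PT PT).
  by move=> w _; exact: piT_cont.
apply: (@compact_closed PT); first exact: hausdorff_PT.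
apply: (@continuous_compact PT PT) => //.
exact/continuous_subspaceT/piT_cont.
Qed.

Definition zv : V := fun _ => 0.

Definition indc (T : {set 'I_n}) (X : set V) : V -> \bar R :=
  fun w => (\1_(cyl T X) w)%:E.

Lemma indc_ge0 T X w : (0 <= indc T X w)%E.
Proof. by rewrite /indc lee_fin indicE. Qed.

Lemma good_indc T X : @compact PT X -> good (indc T X).
Proof. by move=> cX; apply: good_closed; exact: cyl_closed. Qed.

Lemma projvolE S Y : projvol S Y = iint (enum S) (indc S Y) zv.
Proof. by rewrite /projvol setint_iint. Qed.

Lemma good_cst0 : good (fun _ => 0%E).
Proof. by move=> d Q phi _; exact: measurable_cst. Qed.

Lemma affsub_closed (S : {set 'I_n}) (q : V) : @closed PT (affsub S q).
Proof.
have -> : affsub S q = piT (~: S) @^-1` [set piT (~: S) q].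
  apply/seteqP; split => x /=.
    move=> H; apply/funext => i; rewrite /piT; case: ifP => //.
    by rewrite inE => /H.
  move=> E i iS; have := congr1 (fun f => f i) E; by rewrite /piT inE iS.
apply: (@preimage_closed PT PT).
  by move=> w _; exact: piT_cont.
apply: (@compact_closed PT); first exact: hausdorff_PT.
exact: compact_set1.
Qed.

Lemma compact_affI (X : set V) (S : {set 'I_n}) (q : V) : @compact PT X -> @compact PT (X `&` affsub S q).
Proof. by move=> cX; apply: compact_closedI => //; exact: affsub_closed. Qed.

Lemma iint_ge0' s F w : (forall w, 0 <= F w)%E -> (0 <= iint s F w)%E.
Proof. exact: iint_ge0. Qed.

Lemma term_sub (X : set V) (S S' : {set 'I_n}) (q : V) : S' \subset S ->
  projvol S' (X `&` affsub S q) = iint (enum S') (indc (~: S :|: S') X) q.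
Proof.
move=> sub; rewrite projvolE; apply: iint_ext => u Hu.
rewrite /indc; congr ((_ : bool)%:R%:E); apply/idP/idP => /set_mem.
  move=> [x [Xx Ax] H]; apply/mem_set; exists x => // i.
  rewrite !inE => /orP[iS|iS'].
    have iS' : i \notin S' := contra (fintype.subsetP sub i) iS.
    by rewrite mem_enum (negbTE iS') (Ax i iS).
  by rewrite mem_enum iS' H.
move=> [x Xx H]; apply/mem_set; exists x.
  split => // i iS.
  have iS' : i \notin S' := contra (fintype.subsetP sub i) iS.
  by rewrite H ?inE ?iS //= mem_enum (negbTE iS').
move=> i iS'; by rewrite H ?inE ?iS' ?orbT // mem_enum iS'.
Qed.

Lemma term_nsub (X : set V) (S S' : {set 'I_n}) (q : V) : @compact PT X -> ~~ (S' \subset S) ->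
  projvol S' (X `&` affsub S q) = 0%E.
Proof.
move=> cX /fintype.subsetPn [i iS' iS]; rewrite projvolE.
apply: (@iint_zero i (q i)).
- exact/good_indc/compact_affI.
- exact: indc_ge0.
- exact: enum_uniq.
- by rewrite mem_enum.
move=> u uq; rewrite /indc /indic; case: (boolP (u \in _)) => // /set_mem.
move=> [x [Xx Ax] H]; exfalso; move/eqP: uq; apply.
by rewrite -(H i iS') (Ax i iS).
Qed.

Lemma iint_eq s F F' w : (forall u, F u = F' u) -> iint s F w = iint s F' w.
Proof. by move=> H; have -> : F = F' by apply/funext. Qed.

Lemma iint_sum_cond (I : Type) (r : seq I) (P : pred I) (G : I -> V -> \bar R) s w :
  (forall k, good (G k)) -> (forall k w, 0 <= G k w)%E ->
  iint s (fun u => \sum_(k <- r | P k) G k u)%E w = (\sum_(k <- r | P k) iint s (G k) w)%E.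
Proof.
move=> gG G0.
rewrite (@iint_eq s _ (fun u => \sum_(k <- r) (if P k then G k u else 0%E))%E); last first.
  by move=> u; rewrite big_mkcond.
rewrite iint_sum.
- rewrite [RHS]big_mkcond; apply: eq_bigr => k _; case: (P k) => //.
  exact: iint_cst0.
- by move=> k; case: (P k) => //; exact: good_cst0.
- by move=> k u; case: (P k).
Qed.

Lemma perm_enum_U (S S' : {set 'I_n}) : S' \subset S ->
  perm_eq (enum (~: S) ++ enum S') (enum (~: S :|: S')).
Proof.
move=> sub; apply: uniq_perm.
- rewrite cat_uniq !enum_uniq andbT /=; apply/hasPn => i.
  rewrite mem_enum => iS'; rewrite mem_enum inE negbK.
  exact: (fintype.subsetP sub i).
- exact: enum_uniq.
- by move=> i; rewrite mem_cat !mem_enum !inE.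
Qed.

Lemma graff_term (X : set V) (S : {set 'I_n}) (j : nat) : @compact PT X ->
  setint (~: S) (fun q => l1vol j (X `&` affsub S q)) =
  (\sum_(S' : {set 'I_n} | #|S'| == j)
     (if S' \subset S then projvol (~: S :|: S') X else 0))%E.
Proof.
move=> cX; rewrite setint_iint.
pose hh (S' : {set 'I_n}) (q : V) : \bar R :=
  if S' \subset S then iint (enum S') (indc (~: S :|: S') X) q else 0%E.
rewrite (@iint_eq _ _ (fun q => \sum_(S' : {set 'I_n} | #|S'| == j) hh S' q)%E); last first.
  move=> q; rewrite /l1vol; apply: eq_bigr => S' _; rewrite /hh.
  case: ifP => sub; first exact: term_sub.
  by apply: term_nsub => //; rewrite sub.
rewrite iint_sum_cond.
- apply: eq_bigr => S' _; rewrite /hh; case: ifP => sub; last exact: iint_cst0.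
  transitivity (iint (enum (~: S) ++ enum S') (indc (~: S :|: S') X) zv).
    by rewrite iint_cat.
  rewrite (@iint_perm (enum (~: S) ++ enum S') (enum (~: S :|: S')) (indc (~: S :|: S') X) zv).
  + by rewrite projvolE.
  + exact: good_indc cX.
  + exact: indc_ge0.
  + exact: perm_enum_U.
- move=> S'; rewrite /hh; case: (S' \subset S); last exact: good_cst0.
  apply: iint_good; [exact: good_indc cX | exact: indc_ge0].
- move=> S' q; rewrite /hh; case: (S' \subset S) => //.
  apply: iint_ge0; exact: indc_ge0.
Qed.

Lemma projvol_ge0 (T : {set 'I_n}) (Y : set V) : (0 <= projvol T Y)%E.
Proof. by rewrite projvolE; apply: iint_ge0; exact: indc_ge0. Qed.

Lemma card_compl_draws (T : {set 'I_n}) k : (k <= n)%N ->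
  #|[set S : {set 'I_n} | (#|S| == k) && (~: S \subset T)]%SET| = 'C(#|T|, n - k).
Proof.
move=> kn; rewrite -cards_draws.
have cC (B : {set 'I_n}) : (#|B| + #|~: B|)%N = n by rewrite cardsC card_ord.
have -> : [set S : {set 'I_n} | (#|S| == k) && (~: S \subset T)]%SET =
   (@finset.setC _) @: [set A : {set 'I_n} | A \subset T & #|A| == (n - k)%N]%SET.
  apply/setP => A; rewrite inE; apply/idP/imsetP.
    move=> /andP[/eqP cA sT]; exists (~: A); last by rewrite finset.setCK.
    rewrite inE sT /=; have := cC A; rewrite cA => h; apply/eqP; have h2 : #|~: A| = (n - k)%N by lia. exact: h2.
  move=> [x]; rewrite inE => /andP[xT /eqP cx] ->.
  rewrite finset.setCK xT andbT; have := cC x; rewrite cx => h; apply/eqP; lia.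
by rewrite card_imset //; exact: finset.setC_inj.
Qed.

Section Comb.
Variable f : {set 'I_n} -> \bar R.
Hypothesis f0 : forall T, (0 <= f T)%E.
Variables j k : nat.
Hypothesis jk : (j <= k)%N.
Hypothesis kn : (k <= n)%N.

Lemma inner_reindex (S : {set 'I_n}) : #|S| = k ->
  (\sum_(S' : {set 'I_n} | #|S'| == j)
     (if S' \subset S then f (~: S :|: S') else 0))%E =
  (\sum_(T : {set 'I_n} | (#|T| == (n + j - k)%N) && (~: S \subset T)) f T)%E.
Proof.
move=> cS.
rewrite -big_mkcondr.
rewrite [RHS](@reindex_onto _ _ _ _ _ (fun S' => ~: S :|: S') (fun T => T :&: S)); last first.
  move=> T /andP[_ sT]; apply/setP => i; rewrite !inE.
  case: (boolP (i \in S)) => iS; rewrite ?andbT ?andbF //=.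
  by apply/esym; apply: (fintype.subsetP sT); rewrite inE.
apply: eq_bigl => S'.
have cSc : #|~: S| = (n - k)%N by have := cardsC S; rewrite card_ord cS => h; lia.
rewrite finset.subsetUl andbT finset.setIUl.
have -> : ~: S :&: S = finset.set0 by rewrite finset.setIC finset.setICr.
rewrite finset.set0U.
case: (boolP (S' \subset S)) => sub.
  rewrite (finset.setIidPl sub) eqxx !andbT.
  have -> : #|~: S :|: S'| = (n - k + #|S'|)%N.
    rewrite cardsU cSc; suff -> : ~: S :&: S' = finset.set0 by rewrite cards0 subn0.
    apply/setP => i; rewrite !inE; apply/negP => /andP[iS iS'].
    by move: iS; rewrite (fintype.subsetP sub _ iS').
  by apply/eqP/eqP => h; lia.
rewrite andbF; apply/esym/negP => /andP[_ /eqP E]; move: sub.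
by rewrite -E finset.subsetIr.
Qed.

Lemma comb_sum :
  (\sum_(S : {set 'I_n} | #|S| == k) \sum_(S' : {set 'I_n} | #|S'| == j)
     (if S' \subset S then f (~: S :|: S') else 0))%E =
  ('C(n + j - k, j)%:R%:E * \sum_(T : {set 'I_n} | #|T| == (n + j - k)%N) f T)%E.
Proof.
rewrite (eq_bigr (fun S => \sum_(T : {set 'I_n} | (#|T| == (n + j - k)%N) && (~: S \subset T)) f T)%E); last first.
  by move=> S /eqP cS; exact: inner_reindex.
rewrite (exchange_big_dep (fun T : {set 'I_n} => #|T| == (n + j - k)%N)); last first.
  by move=> S T _ /andP[].
rewrite ge0_sume_distrr; last by move=> T _; exact: f0.
apply: eq_bigr => T /eqP cT.
rewrite (eq_bigl (fun S => S \in [set S : {set 'I_n} | (#|S| == k) && (~: S \subset T)]%SET)); last first.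
  by move=> S; rewrite inE cT eqxx.
rewrite sumr_const card_compl_draws // cT mule_natl.
congr (_ *+ _).
rewrite -bin_sub; last lia.
congr 'C(_, _); lia.
Qed.
End Comb.

Lemma first_claim (X : set V) (j k : nat) : @compact PT X -> (j <= k <= n)%N ->
  graff_int k (fun A => l1vol j (X `&` A)) =
  (('C(n + j - k, j))%:R%:E * l1vol (n + j - k) X)%E.
Proof.
move=> cX /andP[jk kn]; rewrite /graff_int.
rewrite (eq_bigr (fun S : {set 'I_n} => \sum_(S' : {set 'I_n} | #|S'| == j)
   (if S' \subset S then projvol (~: S :|: S') X else 0))%E); last first.
  by move=> S _; exact: graff_term.
exact: (@comb_sum (fun T => projvol T X) (fun T => projvol_ge0 T X) j k jk kn).
Qed.

Lemma l1vol0 (Y : set V) : l1vol 0 Y = (\1_(cyl finset.set0 Y) zv)%:E.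
Proof.
rewrite /l1vol (big_pred1 finset.set0); last by move=> S; rewrite cards_eq0.
by rewrite projvolE enum_set0.
Qed.

Lemma second_claim (X : set V) (k : nat) : @compact PT X -> (k <= n)%N ->
  graff_int k (fun A => (\1_[set A' : set V | X `&` A' !=set0] A)%:E) =
  l1vol (n - k) X.
Proof.
move=> cX kn.
have -> : (fun A => (\1_[set A' : set V | X `&` A' !=set0] A)%:E) =
          (fun A => l1vol 0 (X `&` A)).
  apply/funext => A; rewrite l1vol0 /indic; congr ((_ : bool)%:R%:E).
  apply/idP/idP => /set_mem h; apply/mem_set.
    have [x Hx] : X `&` A !=set0 := h.
    by exists x => // i; rewrite inE.
  have [x Hx _] := h; by exists x.
rewrite first_claim //.
by rewrite addn0 bin0 mul1e.
Qed.
End Main.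

Theorem theorem7p1 (R : realType) (n : nat) (X : set ('I_n -> R)) :
  @compact (prod_topology (fun _ : 'I_n => R)) X -> l1_convex X ->
  (forall j k : nat, (j <= k <= n)%N ->
     graff_int k (fun A => l1vol j (X `&` A)) =
     (('C(n + j - k, j))%:R%:E * l1vol (n + j - k) X)%E) /\
  (forall k : nat, (k <= n)%N ->
     graff_int k (fun A => (\1_[set A' : set ('I_n -> R) | X `&` A' !=set0] A)%:E) =
     l1vol (n - k) X).
Proof.
move=> cX _; split.
  by move=> j k h; exact: first_claim.
by move=> k h; exact: second_claim.
Qed.
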